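(* Let $0<\alpha<1$, and for $0<t<1$ let $T_t$ be the weighted composition operator $T_t(f)(z)=\frac{1}{(t-1)z+1}\,f\!\left(\frac{t}{(t-1)z+1}\right)$, $z\in\mathbb D$, acting on $H^\infty_\alpha$. Put $$x_0=\frac{\alpha+2\alpha t-t-\sqrt{4\alpha^2t-2\alpha t+\alpha^2-2\alpha+1}}{2\alpha-1}.$$ Then $$\|T_t\|_{H^\infty_\alpha\to H^\infty_\alpha}=\begin{cases}\dfrac{t^{\alpha-1}}{(1-t)^\alpha} & \text{if } 0<\alpha\le 2/3,\ 0<t<1,\ \text{or if } 2/3<\alpha<1,\ \frac{3\alpha-2}{4\alpha-2}\le t<1,\\[2mm] (1-x_0)^{2\alpha-1}\left(\dfrac{1-\left|\frac{x_0}{1-t}\right|^2}{(1-x_0)^2-t^2}\right)^{\alpha} & \text{if } 2/3<\alpha<1,\ 0<t<\frac{3\alpha-2}{4\alpha-2}.\end{cases}$$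
   Context: $\mathbb D$ is the open unit disc of $\mathbb C$. For $0<\alpha<1$, the Korenblum space is $H^\infty_\alpha=\{f \text{ analytic on } \mathbb D: \|f\|_{H^\infty_\alpha}=\sup_{z\in\mathbb D}(1-|z|^2)^\alpha|f(z)|<\infty\}$, and $\|T\|_{H^\infty_\alpha\to H^\infty_\alpha}$ denotes the operator norm. *)

(* Defs.v *)
From Stdlib Require Import Reals.
From Coquelicot Require Import Coquelicot.
Open Scope R_scope.

Definition in_disc (z : C) : Prop := Cmod z < 1.

Definition analytic_on_disc (f : C -> C) : Prop :=
  forall z : C, in_disc z -> @ex_derive C_AbsRing C_NormedModule f z.

Definition kor_norm (alpha : R) (f : C -> C) : Rbar :=
  Lub_Rbar (fun r => exists z : C, in_disc z /\
     r = Rpower (1 - (Cmod z) ^ 2) alpha * Cmod (f z)).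

Definition in_Korenblum (alpha : R) (f : C -> C) : Prop :=
  analytic_on_disc f /\ is_finite (kor_norm alpha f).

Definition op_norm_Korenblum (alpha : R) (T : (C -> C) -> (C -> C)) : Rbar :=
  Lub_Rbar (fun r => exists f : C -> C, in_Korenblum alpha f /\
     Rbar_le (kor_norm alpha f) (Finite 1) /\ Finite r = kor_norm alpha (T f)).

Definition Tt (t : R) (f : C -> C) : C -> C :=
  fun z => Cmult (Cinv (Cplus (Cmult (RtoC (t - 1)) z) (RtoC 1)))
                 (f (Cdiv (RtoC t) (Cplus (Cmult (RtoC (t - 1)) z) (RtoC 1)))).

Definition x0 (alpha t : R) : R :=
  (alpha + 2 * alpha * t - t
   - sqrt (4 * alpha ^ 2 * t - 2 * alpha * t + alpha ^ 2 - 2 * alpha + 1))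
  / (2 * alpha - 1).

(* Main.v *)
Require Import Defs.
From Stdlib Require Import Reals Lra Psatz.
From Coquelicot Require Import Coquelicot.
Open Scope R_scope.

Lemma Rabs_bt a b : Rabs a <= b -> -b <= a <= b.
Proof. unfold Rabs; destruct Rcase_abs; lra. Qed.

Lemma sin_cube_lb a : 0 <= a -> a <= 4 -> a - a^3/6 <= sin a.
Proof.
  intros H1 H2. destruct (pre_sin_bound a 0 H1 H2) as [H _].
  unfold sin_approx, sin_term in H. simpl in H. 
  eapply Rle_trans; [|exact H]. right. field.
Qed.

Lemma sin_near a : Rabs a <= 1/2 -> Rabs (sin a - a) <= a^2.
Proof.
  intros Ha. destruct (Rle_or_lt 0 a) as [H|H].
  - destruct (Req_dec a 0) as [->|Hn]. rewrite sin_0. replace (0-0) with 0 by ring. rewrite Rabs_R0. lra.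
    assert (0 < a) by lra. pose proof (sin_lt_x a H0). pose proof (sin_cube_lb a H).
    rewrite Rabs_pos_eq in Ha by lra. rewrite Rabs_left by lra. nra.
  - pose proof (sin_lt_x (-a)). pose proof (sin_cube_lb (-a)). rewrite sin_neg in *.
    rewrite Rabs_left in Ha by lra. rewrite Rabs_pos_eq. nra. nra.
Qed.

Lemma cos_near b : Rabs b <= 1/2 -> Rabs (cos b - 1) <= b^2.
Proof.
  intros Hb. replace b with (2 * (b/2)) by field. rewrite cos_2a_sin.
  assert (Rabs (sin (b/2)) <= Rabs (b/2)).
  { destruct (Rle_or_lt 0 b).
    - destruct (Req_dec b 0) as [->|Hn]. replace (0/2) with 0 by field. rewrite sin_0. lra.
      pose proof (sin_lt_x (b/2)). assert (0 <= sin (b/2)). apply sin_ge_0. lra.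
      pose proof PI2_3_2. rewrite Rabs_pos_eq in Hb; lra. 
      rewrite !Rabs_pos_eq; lra.
    - pose proof (sin_lt_x (-(b/2))). assert (0 <= sin (-(b/2))). apply sin_ge_0. lra.
      pose proof PI2_3_2. rewrite Rabs_left in Hb; lra. rewrite sin_neg in *.
      assert (Hq: 0 < - (b/2)) by lra. specialize (H0 Hq).
      rewrite (Rabs_left1 (sin (b/2))) by lra. rewrite (Rabs_left (b/2)) by lra. lra. }
  assert (sin (b/2) * sin (b/2) <= (b/2)^2).
  { pose proof (Rabs_pos (sin (b/2))).
    assert (Rabs (sin (b/2)) * Rabs (sin (b/2)) <= Rabs (b/2) * Rabs (b/2)) by nra.
    rewrite <- !Rabs_mult in H1. rewrite !Rabs_pos_eq in H1 by nra. nra. }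
  rewrite Rabs_left1; nra.
Qed.

Lemma exp_le_inv a : a < 1 -> exp a <= / (1 - a).
Proof.
  intros H. pose proof (exp_ineq1_le (-a)). rewrite exp_Ropp in H0.
  assert (0 < exp a) by apply exp_pos.
  apply (Rmult_le_reg_l (1 - a)). lra. rewrite Rinv_r by lra.
  apply (Rmult_le_reg_r (/ exp a)). apply Rinv_0_lt_compat; lra.
  rewrite Rmult_1_l, Rmult_assoc, Rinv_r by lra. lra.
Qed.

Lemma exp_near a : Rabs a <= 1/2 -> 0 <= exp a - 1 - a <= 2 * a^2 /\ Rabs (exp a - 1) <= 2 * Rabs a /\ exp a <= 2.
Proof.
  intros Ha. assert (Hb : -(1/2) <= a <= 1/2) by (apply Rabs_bt; exact Ha).
  pose proof (exp_ineq1_le a). pose proof (exp_le_inv a ltac:(lra)).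
  assert (E1 : / (1 - a) - 1 - a = a^2 / (1-a)) by (field; lra).
  assert (E2 : a^2/(1-a) <= 2 * a^2).
  { apply (Rmult_le_reg_r (1-a)). lra. unfold Rdiv. rewrite Rmult_assoc, Rinv_l by lra. nra. }
  assert (E3 : / (1 - a) <= 2). { apply (Rmult_le_reg_r (1-a)). lra. rewrite Rinv_l by lra. lra. }
  split; [lra|]. split; [|lra].
  destruct (Rle_or_lt 0 a).
  - rewrite Rabs_pos_eq by lra. rewrite (Rabs_pos_eq a) by lra. nra.
  - assert (exp a < 1). { rewrite <- exp_0. apply exp_increasing. lra. }
    rewrite Rabs_left by lra. rewrite (Rabs_left a) by lra. lra.
Qed.

Lemma is_derive_C (f : C -> C) (z l : C) :
  (forall eps, 0 < eps -> exists d, 0 < d /\ forall h : C, Cmod h < d ->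
     Cmod (Cminus (Cminus (f (Cplus z h)) (f z)) (Cmult l h)) <= eps * Cmod h) ->
  @is_derive C_AbsRing C_NormedModule f z l.
Proof.
  intros H. split.
  - apply is_linear_scal_l.
  - intros x Hx. 
    assert (Hxz : x = z).
    { symmetry. exact (@is_filter_lim_locally_unique C_AbsRing (AbsRing_NormedModule C_AbsRing) z x Hx). }
    subst x. intros eps.
    destruct (H eps (cond_pos eps)) as [d [Hd Hh]].
    exists (mkposreal _ Hd). intros y Hy.
    change (Cmod (minus y z) < d) in Hy.
    specialize (Hh (minus y z) Hy).
    replace (Cplus z (minus y z)) with y in Hh.
    2:{ unfold minus, plus, opp; simpl. assert (E: forall a b : C, a = Cplus b (Cplus a (Copp b))) by (intros; ring). apply E. }
    change (Cmod (minus (minus (f y) (f z)) (scal (minus y z) l)) <= eps * Cmod (minus y z)).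
    replace (minus (minus (f y) (f z)) (scal (minus y z) l)) with
       (Cminus (Cminus (f y) (f z)) (Cmult l (minus y z))). exact Hh.
    unfold minus, plus, opp, scal; simpl. unfold mult; simpl. assert (E: forall a b c d l: C, Cminus (Cminus a b) (Cmult l (Cplus c (Copp d))) = Cplus (Cplus a (Copp b)) (Copp (Cmult (Cplus c (Copp d)) l))) by (intros; ring). apply E.
Qed.

Lemma is_derive_C' (f : C -> C) (z l : C) :
  (forall eps, 0 < eps -> exists d, 0 < d /\ forall h : C, Cmod h < d ->
     Cmod (Cminus (Cminus (f (Cplus z h)) (f z)) (Cmult l h)) <= eps * Cmod h) ->
  @is_derive C_AbsRing (AbsRing_NormedModule C_AbsRing) f z l.
Proof.
  intros H. split.
  - apply is_linear_scal_l.
  - intros x Hx. 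
    assert (Hxz : x = z).
    { symmetry. exact (@is_filter_lim_locally_unique C_AbsRing (AbsRing_NormedModule C_AbsRing) z x Hx). }
    subst x. intros eps.
    destruct (H eps (cond_pos eps)) as [d [Hd Hh]].
    exists (mkposreal _ Hd). intros y Hy.
    change (Cmod (minus y z) < d) in Hy.
    specialize (Hh (minus y z) Hy).
    replace (Cplus z (minus y z)) with y in Hh.
    2:{ unfold minus, plus, opp; simpl. assert (E: forall a b : C, a = Cplus b (Cplus a (Copp b))) by (intros; ring). apply E. }
    change (Cmod (minus (minus (f y) (f z)) (scal (minus y z) l)) <= eps * Cmod (minus y z)).
    replace (minus (minus (f y) (f z)) (scal (minus y z) l)) with
       (Cminus (Cminus (f y) (f z)) (Cmult l (minus y z))). exact Hh.
    unfold minus, plus, opp, scal; simpl. unfold mult; simpl. assert (E: forall a b c d l: C, Cminus (Cminus a b) (Cmult l (Cplus c (Copp d))) = Cplus (Cplus a (Copp b)) (Copp (Cmult (Cplus c (Copp d)) l))) by (intros; ring). apply E.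
Qed.

Lemma is_derive_C_inv (f : C -> C) (z l : C) :
  @is_derive C_AbsRing C_NormedModule f z l ->
  (forall eps, 0 < eps -> exists d, 0 < d /\ forall h : C, Cmod h < d ->
     Cmod (Cminus (Cminus (f (Cplus z h)) (f z)) (Cmult l h)) <= eps * Cmod h).
Proof.
  intros [_ H] eps He.
  specialize (H z (fun P HP => HP)).
  destruct (H (mkposreal _ He)) as [d Hd].
  exists d. split. apply cond_pos. intros h Hh.
  specialize (Hd (Cplus z h)).
  assert (E1 : minus (Cplus z h) z = h).
  { unfold minus, plus, opp; simpl. assert (E: forall a b : C, Cplus (Cplus b a) (Copp b) = a) by (intros; ring). apply E. }
  assert (Hb : @ball (AbsRing_UniformSpace C_AbsRing) z d (Cplus z h)). { change (Cmod (minus (Cplus z h) z) < d). rewrite E1. exact Hh. }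
  specialize (Hd Hb). simpl in Hd.
  change (Cmod (minus (minus (f (Cplus z h)) (f z)) (scal (minus (Cplus z h) z) l)) <= eps * Cmod (minus (Cplus z h) z)) in Hd.
  rewrite E1 in Hd.
  replace (Cminus (Cminus (f (Cplus z h)) (f z)) (Cmult l h)) with (minus (minus (f (Cplus z h)) (f z)) (scal h l)). exact Hd.
  unfold minus, plus, opp, scal; simpl. unfold mult; simpl. assert (E: forall a b l h: C, Cplus (Cplus a (Copp b)) (Copp (Cmult h l)) = Cminus (Cminus a b) (Cmult l h)) by (intros; ring). apply E.
Qed.

Lemma is_derive_C_conv (f : C -> C) (z l : C) :
  @is_derive C_AbsRing C_NormedModule f z l ->
  @is_derive C_AbsRing (AbsRing_NormedModule C_AbsRing) f z l.
Proof. intros H. apply is_derive_C'. apply is_derive_C_inv. exact H. Qed.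

Definition cexp (z : C) : C := (exp (fst z) * cos (snd z), exp (fst z) * sin (snd z)).

Lemma cexp_plus a b : cexp (Cplus a b) = Cmult (cexp a) (cexp b).
Proof.
  destruct a as [a1 a2], b as [b1 b2]. unfold cexp, Cplus, Cmult; simpl.
  rewrite exp_plus, cos_plus, sin_plus. f_equal; ring.
Qed.

Lemma cexp_0 : cexp (RtoC 0) = RtoC 1.
Proof. unfold cexp, RtoC; simpl. rewrite exp_0, cos_0, sin_0. f_equal; ring. Qed.

Lemma Cmod_cexp z : Cmod (cexp z) = exp (fst z).
Proof.
  destruct z as [a b]. unfold Cmod, cexp; cbn [fst snd].
  pose proof (sin2_cos2 b) as E. unfold Rsqr in E.
  replace ((exp a * cos b) ^ 2 + (exp a * sin b) ^ 2) with (exp a ^ 2 * (sin b * sin b + cos b * cos b)) by ring.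
  rewrite E, Rmult_1_r. apply sqrt_pow2. left; apply exp_pos.
Qed.

Lemma Cmod_le_sum x y : Cmod (x, y) <= Rabs x + Rabs y.
Proof.
  unfold Cmod; simpl. rewrite <- (sqrt_pow2 (Rabs x + Rabs y)).
  2:{ pose proof (Rabs_pos x); pose proof (Rabs_pos y); lra. }
  apply sqrt_le_1_alt. 
  pose proof (Rabs_pos x); pose proof (Rabs_pos y).
  replace (x * (x * 1)) with (Rabs x * Rabs x). replace (y * (y*1)) with (Rabs y * Rabs y).
  nra. rewrite <- Rabs_mult. rewrite Rabs_pos_eq; nra.
  rewrite <- Rabs_mult. rewrite Rabs_pos_eq; nra.
Qed.

Lemma Cmod_sq z : Cmod z ^ 2 = fst z ^ 2 + snd z ^ 2.
Proof. destruct z. apply Cmod2_alt. Qed.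

Lemma cexp_quad h : Cmod h <= 1/2 ->
  Cmod (Cminus (Cminus (cexp h) (RtoC 1)) h) <= 5 * Cmod h ^ 2.
Proof.
  intros Hh. destruct h as [a b].
  pose proof (re_le_Cmod (a,b)) as Ha. pose proof (re_le_Cmod (Cmult Ci (a,b))) as Hb.
  rewrite Cmod_mult, Cmod_Ci, Rmult_1_l in Hb. simpl in Ha, Hb.
  replace (0 * a - 1 * b) with (- b) in Hb by ring. rewrite Rabs_Ropp in Hb.
  rewrite Cmod_sq. simpl.
  destruct (exp_near a ltac:(lra)) as [E1 [E2 E3]].
  pose proof (cos_near b ltac:(lra)) as Cb. pose proof (sin_near b ltac:(lra)) as Sb.
  pose proof (exp_pos a).
  unfold cexp, Cminus, Cplus, Copp, RtoC; simpl.
  eapply Rle_trans; [apply Cmod_le_sum|].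
  replace (exp a * cos b + - (1) + - a) with (exp a * (cos b - 1) + (exp a - 1 - a)) by ring.
  replace (exp a * sin b + - (0) + - b) with (exp a * (sin b - b) + b * (exp a - 1)) by ring.
  eapply Rle_trans. apply Rplus_le_compat; apply Rabs_triang.
  rewrite !Rabs_mult. rewrite (Rabs_pos_eq (exp a)) by lra.
  rewrite (Rabs_pos_eq (exp a - 1 - a)) by lra.
  assert (Rabs b * Rabs (exp a - 1) <= Rabs b * (2 * Rabs a)).
  { apply Rmult_le_compat_l. apply Rabs_pos. exact E2. }
  assert (2 * (Rabs b * Rabs a) <= a^2 + b^2).
  { rewrite <- Rabs_mult. 
    assert (Rabs (b*a) <= (a^2+b^2)/2). pose proof (pow2_ge_0 (a+b)); pose proof (pow2_ge_0 (a-b)). unfold Rabs; destruct Rcase_abs; nra. lra. }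
  assert (exp a * Rabs (cos b - 1) <= 2 * b^2).
  { apply Rmult_le_compat; try lra. apply Rabs_pos. }
  assert (exp a * Rabs (sin b - b) <= 2 * b^2).
  { apply Rmult_le_compat; try lra. apply Rabs_pos. }
  nra.
Qed.

Lemma cont_eps (f : R -> R) x : continuous f x ->
  forall eps, 0 < eps -> exists d, 0 < d /\ forall y, Rabs (y - x) < d -> Rabs (f y - f x) < eps.
Proof.
  intros Hc eps He. apply filterlim_locally with (eps := mkposreal _ He) in Hc.
  destruct Hc as [d Hd]. exists d. split. apply cond_pos.
  intros y Hy. apply (Hd y). exact Hy.
Qed.

Definition clog (v : C) : C := (ln (Cmod v), atan (snd v / fst v)).

Lemma Cmod_pos_re v : 0 < fst v -> 0 < Cmod v.
Proof. intros H. pose proof (re_le_Cmod v). unfold Re in H0. pose proof (Rabs_pos (fst v)). rewrite Rabs_pos_eq in H0; lra. Qed.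

Lemma cexp_clog v : 0 < fst v -> cexp (clog v) = v.
Proof.
  intros H. pose proof (Cmod_pos_re v H) as Hm.
  destruct v as [x y]. simpl in H. unfold cexp, clog; cbn [fst snd].
  rewrite exp_ln by exact Hm. rewrite cos_atan, sin_atan.
  assert (E : sqrt (1 + (y / x)²) = Cmod (x,y) / x).
  { unfold Cmod; cbn [fst snd]. 
    replace (x ^ 2 + y ^ 2) with (x² * (1 + (y/x)²)) by (unfold Rsqr; field; lra).
    rewrite sqrt_mult_alt by (apply Rle_0_sqr). rewrite sqrt_Rsqr by lra. field. lra. }
  rewrite E. f_equal; field; split; lra.
Qed.

Lemma Cmod_re_im_le v : Rabs (fst v) <= Cmod v /\ Rabs (snd v) <= Cmod v.
Proof.
  split. apply re_le_Cmod.
  pose proof (re_le_Cmod (Cmult Ci v)) as Hb.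
  rewrite Cmod_mult, Cmod_Ci, Rmult_1_l in Hb. destruct v as [a b]. simpl in Hb |- *.
  replace (0 * a - 1 * b) with (- b) in Hb by ring. rewrite Rabs_Ropp in Hb. exact Hb.
Qed.

Lemma Cmod_minus_le a b : Rabs (Cmod a - Cmod b) <= Cmod (Cminus a b).
Proof.
  pose proof (Cmod_triangle (Cminus a b) b). pose proof (Cmod_triangle (Cminus b a) a).
  replace (Cplus (Cminus a b) b) with a in H by ring.
  replace (Cplus (Cminus b a) a) with b in H0 by ring.
  replace (Cminus b a) with (Copp (Cminus a b)) in H0 by ring. rewrite Cmod_opp in H0.
  unfold Rabs; destruct Rcase_abs; lra.
Qed.

Lemma clog_cont v : 0 < fst v -> forall eps, 0 < eps -> exists d, 0 < d /\
  forall h, Cmod h < d -> Cmod (Cminus (clog (Cplus v h)) (clog v)) < eps.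
Proof.
  intros Hv eps He. pose proof (Cmod_pos_re v Hv) as Hm.
  destruct (cont_eps ln (Cmod v) (continuous_ln _ Hm) (eps/2) ltac:(lra)) as [d1 [Hd1 H1]].
  destruct (cont_eps atan (snd v / fst v) (continuous_atan _) (eps/2) ltac:(lra)) as [d2 [Hd2 H2]].
  set (x := fst v). set (y := snd v). fold x in Hv.
  set (d3 := d2 * x * x / (2 * (x + Rabs y))).
  assert (Hd3 : 0 < d3). { unfold d3. pose proof (Rabs_pos y). apply Rdiv_lt_0_compat. apply Rmult_lt_0_compat; [apply Rmult_lt_0_compat|]; lra. lra. }
  exists (Rmin (Rmin d1 (x/2)) d3). split.
  { apply Rmin_glb_lt. apply Rmin_glb_lt; lra. lra. }
  intros h Hh. 
  pose proof (Rmin_l (Rmin d1 (x/2)) d3). pose proof (Rmin_r (Rmin d1 (x/2)) d3).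
  pose proof (Rmin_l d1 (x/2)). pose proof (Rmin_r d1 (x/2)).
  assert (Hh1 : Cmod h < d1) by lra.
  assert (Hh2 : Cmod h < x/2) by lra.
  assert (Hh3 : Cmod h < d3) by lra.
  destruct (Cmod_re_im_le h) as [Ha Hb].
  destruct h as [a b]. cbn [fst snd] in Ha, Hb.
  unfold clog, Cminus, Cplus, Copp. cbn [fst snd].
  eapply Rle_lt_trans; [apply Cmod_le_sum|].
  assert (A1 : Rabs (ln (Cmod (fst v + a, snd v + b)) - ln (Cmod v)) < eps/2).
  { apply H1. eapply Rle_lt_trans; [|exact Hh1].
    replace (Cmod (a,b)) with (Cmod (Cminus (fst v + a, snd v + b) v)).
    apply Cmod_minus_le. f_equal. destruct v; unfold Cminus, Cplus, Copp; simpl. f_equal; ring. }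
  assert (A2 : Rabs (atan ((snd v + b) / (fst v + a)) - atan (snd v / fst v)) < eps/2).
  { apply H2. fold x y. 
    assert (Hx' : x / 2 < x + a). { apply Rabs_bt in Ha. lra. }
    replace ((y + b) / (x + a) - y / x) with ((b * x - y * a) / (x * (x + a))) by (field; lra).
    rewrite Rabs_div by nra. rewrite Rabs_mult. rewrite (Rabs_pos_eq x) by lra. rewrite (Rabs_pos_eq (x+a)) by lra.
    apply (Rmult_lt_reg_r (x * (x+a))). nra. unfold Rdiv. rewrite Rmult_assoc, Rinv_l by nra. rewrite Rmult_1_r.
    eapply Rle_lt_trans. apply Rabs_triang. rewrite Rabs_Ropp, !Rabs_mult, (Rabs_pos_eq x) by lra.
    pose proof (Rabs_pos y).
    assert (Cmod (a,b) * (x + Rabs y) < d2 * x * x / 2).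
    { unfold d3 in Hh3. apply (Rmult_lt_compat_r (x + Rabs y)) in Hh3; [|lra].
      eapply Rlt_le_trans; [exact Hh3|]. right. field. lra. }
    assert (Rabs b * x + Rabs y * Rabs a <= Cmod (a,b) * (x + Rabs y)) by nra.
    assert (x * x / 2 <= x * (x + a)) by nra.
    assert (d2 * (x * x / 2) <= d2 * (x * (x + a))) by (apply Rmult_le_compat_l; lra).
    lra. }
  replace (ln (Cmod (fst v + a, snd v + b)) + - ln (Cmod v)) with (ln (Cmod (fst v + a, snd v + b)) - ln (Cmod v)) by ring.
  replace (atan ((snd v + b) / (fst v + a)) + - atan (snd v / fst v)) with (atan ((snd v + b) / (fst v + a)) - atan (snd v / fst v)) by ring.
  lra.
Qed.

Lemma cexp_derive w : @is_derive C_AbsRing C_NormedModule cexp w (cexp w).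
Proof.
  apply is_derive_C. intros eps He.
  set (M := exp (fst w)). assert (HM : 0 < M) by apply exp_pos.
  exists (Rmin (1/2) (eps / (5 * M))). split.
  { apply Rmin_glb_lt. lra. apply Rdiv_lt_0_compat; lra. }
  intros h Hh. pose proof (Rmin_l (1/2) (eps / (5 * M))). pose proof (Rmin_r (1/2) (eps / (5 * M))).
  rewrite cexp_plus.
  replace (Cminus (Cminus (Cmult (cexp w) (cexp h)) (cexp w)) (Cmult (cexp w) h))
    with (Cmult (cexp w) (Cminus (Cminus (cexp h) (RtoC 1)) h)) by ring.
  rewrite Cmod_mult, Cmod_cexp. fold M.
  pose proof (cexp_quad h ltac:(lra)). pose proof (Cmod_ge_0 h).
  assert (Cmod h * (5 * M) <= eps).
  { assert (Cmod h <= eps / (5 * M)) by lra. 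
    apply (Rmult_le_compat_r (5 * M)) in H3; [|lra]. unfold Rdiv in H3. rewrite Rmult_assoc, Rinv_l in H3 by lra. lra. }
  apply Rle_trans with (M * (5 * Cmod h ^ 2)). apply Rmult_le_compat_l; lra.
  simpl. nra.
Qed.

Lemma clog_derive v : 0 < fst v -> @is_derive C_AbsRing C_NormedModule clog v (Cinv v).
Proof.
  intros Hv. apply is_derive_C. intros eps He.
  pose proof (Cmod_pos_re v Hv) as Hm.
  assert (Hv0 : v <> RtoC 0). { intros E. rewrite E, Cmod_0 in Hm. lra. }
  set (m := Rmin (1/10) (eps * Cmod v / 10)).
  assert (Hmpos : 0 < m). { apply Rmin_glb_lt. lra. apply Rdiv_lt_0_compat; [apply Rmult_lt_0_compat|]; lra. }
  destruct (clog_cont v Hv m Hmpos) as [d [Hd Hk]].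
  exists (Rmin d (fst v)). split. apply Rmin_glb_lt; lra.
  intros h Hh. pose proof (Rmin_l d (fst v)). pose proof (Rmin_r d (fst v)).
  specialize (Hk h ltac:(lra)).
  set (k := Cminus (clog (Cplus v h)) (clog v)) in *.
  assert (Hvh : 0 < fst (Cplus v h)).
  { destruct (Cmod_re_im_le h) as [Ha _]. apply Rabs_bt in Ha. destruct v, h; simpl in *. lra. }
  assert (Eh : Cplus v h = Cmult v (cexp k)).
  { unfold k. rewrite <- (cexp_clog v Hv) at 2. rewrite <- cexp_plus.
    replace (Cplus (clog v) (Cminus (clog (Cplus v h)) (clog v))) with (clog (Cplus v h)) by ring.
    rewrite cexp_clog; auto. }
  assert (Eh2 : Cmult (Cinv v) h = Cminus (cexp k) (RtoC 1)).
  { replace h with (Cminus (Cplus v h) v) by ring. rewrite Eh. field. exact Hv0. }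
  rewrite Eh2.
  fold k.
  assert (Hm1 : m <= 1/10) by apply Rmin_l. assert (Hm2 : m <= eps * Cmod v / 10) by apply Rmin_r.
  set (E := Cminus (Cminus (cexp k) (RtoC 1)) k).
  pose proof (cexp_quad k ltac:(lra)) as HE. fold E in HE.
  replace (Cminus k (Cminus (cexp k) (RtoC 1))) with (Copp E) by (unfold E; ring).
  rewrite Cmod_opp.
  assert (Hh2 : Cmod v * Cmod k / 2 <= Cmod h).
  { replace h with (Cmult v (Cplus k E)).
    2:{ replace h with (Cminus (Cplus v h) v) by ring. rewrite Eh. unfold E. ring. }
    rewrite Cmod_mult. 
    pose proof (Cmod_triangle (Cplus k E) (Copp E)). 
    replace (Cplus (Cplus k E) (Copp E)) with k in H1 by ring. rewrite Cmod_opp in H1.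
    pose proof (Cmod_ge_0 k).
    assert (Cmod E <= Cmod k / 2) by nra.
    apply Rmult_le_compat_l with (r := Cmod v) in H1; [|lra]. nra. }
  pose proof (Cmod_ge_0 k).
  assert (Cmod k <= eps * Cmod v / 10) by lra.
  apply Rle_trans with (5 * Cmod k ^ 2). exact HE.
  assert (5 * Cmod k ^ 2 <= (eps * Cmod v / 2) * Cmod k) by (simpl; nra).
  assert ((eps * Cmod v / 2) * Cmod k <= eps * Cmod h).
  { replace ((eps * Cmod v / 2) * Cmod k) with (eps * (Cmod v * Cmod k / 2)) by field.
    apply Rmult_le_compat_l; lra. }
  lra.
Qed.

Definition Lf (a t r : R) : R := a * (ln (2 - t - r) + 2 * ln r - ln (r + t)) - ln r.
Definition qf (a t r : R) : R := (2 * a - 1) * (2 - t - r) * (r + t) - 2 * a * r.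

Lemma Lf_derive a t r : 0 < t -> 0 < r -> r < 2 - t ->
  is_derive (Lf a t) r (qf a t r / (r * (2 - t - r) * (r + t))).
Proof.
  intros Ht Hr Hr2. unfold Lf, qf.
  auto_derive. repeat split; lra.
  field. repeat split; lra.
Qed.

Lemma Lf_cont a t r : 0 < t -> 0 < r -> r < 2 - t -> continuity_pt (Lf a t) r.
Proof.
  intros. apply continuity_pt_filterlim. apply (@ex_derive_continuous R_AbsRing R_NormedModule).
  eexists. apply Lf_derive; auto.
Qed.

Lemma Lf_mono a t r1 r2 : 0 < t -> t <= r1 -> r1 <= r2 -> r2 < 2 - t ->
  ((forall c, r1 <= c <= r2 -> qf a t c <= 0) -> Lf a t r2 <= Lf a t r1) /\
  ((forall c, r1 <= c <= r2 -> 0 <= qf a t c) -> Lf a t r1 <= Lf a t r2).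
Proof.
  intros Ht H1 H12 H2.
  destruct (MVT_gen (Lf a t) r1 r2 (fun r => qf a t r / (r * (2 - t - r) * (r + t)))) as [c [Hc E]].
  { intros x Hx. rewrite Rmin_left, Rmax_right in Hx by lra. apply Lf_derive; lra. }
  { intros x Hx. rewrite Rmin_left, Rmax_right in Hx by lra. apply Lf_cont; lra. }
  rewrite Rmin_left, Rmax_right in Hc by lra.
  assert (Hd : 0 < c * (2 - t - c) * (c + t)).
  { apply Rmult_lt_0_compat. apply Rmult_lt_0_compat; lra. lra. }
  split; intros Hq; specialize (Hq c Hc).
  - assert (qf a t c / (c * (2 - t - c) * (c + t)) <= 0).
    { unfold Rdiv. apply Rmult_le_0_r. exact Hq. left; apply Rinv_0_lt_compat; exact Hd. }
    assert (qf a t c / (c * (2 - t - c) * (c + t)) * (r2 - r1) <= 0).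
    { apply Rmult_le_0_r; lra. }
    lra.
  - assert (0 <= qf a t c / (c * (2 - t - c) * (c + t))).
    { unfold Rdiv. apply Rmult_le_pos. exact Hq. left; apply Rinv_0_lt_compat; exact Hd. }
    assert (0 <= qf a t c / (c * (2 - t - c) * (c + t)) * (r2 - r1)).
    { apply Rmult_le_pos; lra. }
    lra.
Qed.

Definition gf (a t r : R) : R := exp (Lf a t r - 2 * a * ln (1 - t)).

Lemma q_case1 a t c : 0 < a -> a < 1 -> 0 < t -> t < 1 ->
  (a <= 2 / 3 \/ (2 / 3 < a /\ (3 * a - 2) / (4 * a - 2) <= t)) ->
  t <= c -> c < 2 - t -> qf a t c <= 0.
Proof.
  intros Ha0 Ha1 Ht0 Ht1 Hcase Hc1 Hc2. unfold qf.
  assert (HA : 0 < 2 - t - c) by lra. assert (HB : 0 < c + t) by lra.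
  assert (HAB : 0 < (2 - t - c) * (c + t)) by (apply Rmult_lt_0_compat; lra).
  destruct (Rle_or_lt a (1/2)) as [Hh|Hh].
  - assert ((2 * a - 1) * ((2 - t - c) * (c + t)) <= 0).
    { apply Rmult_le_0_r; lra. }
    assert (0 < a * c) by (apply Rmult_lt_0_compat; lra). 
    rewrite Rmult_assoc. lra.
  - assert (Hqt : (2 * a - 1) * (2 - t - t) * (t + t) - 2 * a * t <= 0).
    { replace ((2 * a - 1) * (2 - t - t) * (t + t) - 2 * a * t) with (t * (6 * a - 4 - (8 * a - 4) * t)) by ring.
      apply Rmult_le_0_l. lra.
      destruct Hcase as [Hc|[Hc1' Hc2']].
      + assert (0 < (8 * a - 4) * t) by (apply Rmult_lt_0_compat; lra). lra.
      + assert (3 * a - 2 <= (4 * a - 2) * t).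
        { apply (Rmult_le_compat_l (4 * a - 2)) in Hc2'; [|lra].
          replace ((4 * a - 2) * ((3 * a - 2) / (4 * a - 2))) with (3 * a - 2) in Hc2' by (field; lra). lra. }
        lra. }
    replace ((2 * a - 1) * (2 - t - c) * (c + t) - 2 * a * c) with
      (((2 * a - 1) * (2 - t - t) * (t + t) - 2 * a * t) +
       (c - t) * ((2 * a - 1) * (- (c + t) + 2 * (1 - t)) - 2 * a)) by ring.
    assert ((c - t) * ((2 * a - 1) * (- (c + t) + 2 * (1 - t)) - 2 * a) <= 0).
    { apply Rmult_le_0_l. lra.
      assert (0 <= (2 * a - 1) * (c + t)) by (apply Rmult_le_pos; lra).
      assert ((2 * a - 1) * (2 * (1 - t)) <= (2 * a - 1) * 2) by (apply Rmult_le_compat_l; lra).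
      lra. }
    lra.
Qed.

Definition Delta (a t : R) : R := 4 * a ^ 2 * t - 2 * a * t + a ^ 2 - 2 * a + 1.

Lemma Delta_eq a t : Delta a t = (a - 1 + t * (1 - 2 * a)) ^ 2 + (2 * a - 1) ^ 2 * (t * (2 - t)).
Proof. unfold Delta. ring. Qed.

Definition rho0 (a t : R) : R :=
  1 - (a + 2 * a * t - t - sqrt (Delta a t)) / (2 * a - 1).
Definition rho1 (a t : R) : R :=
  1 - (a + 2 * a * t - t + sqrt (Delta a t)) / (2 * a - 1).

Lemma q_factor a t r : 1/2 < a -> 0 < t -> t < 1 ->
  qf a t r = - (2 * a - 1) * (r - rho0 a t) * (r - rho1 a t).
Proof.
  intros Ha Ht0 Ht1.
  assert (HD : 0 <= Delta a t).
  { rewrite Delta_eq. assert (0 <= (2 * a - 1) ^ 2 * (t * (2 - t))).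
    apply Rmult_le_pos. apply pow2_ge_0. apply Rmult_le_pos; lra.
    pose proof (pow2_ge_0 (a - 1 + t * (1 - 2 * a))). lra. }
  pose proof (sqrt_sqrt _ HD) as Hs.
  unfold rho0, rho1. set (S := sqrt (Delta a t)) in *.
  set (u := a + 2 * a * t - t).
  replace (r - (1 - (u - S) / (2 * a - 1))) with (((2 * a - 1) * (r - 1) + u - S) / (2 * a - 1)) by (field; lra).
  replace (r - (1 - (u + S) / (2 * a - 1))) with (((2 * a - 1) * (r - 1) + u + S) / (2 * a - 1)) by (field; lra).
  replace (- (2 * a - 1) * (((2 * a - 1) * (r - 1) + u - S) / (2 * a - 1)) *
     (((2 * a - 1) * (r - 1) + u + S) / (2 * a - 1))) with
     (- (((2 * a - 1) * (r - 1) + u) ^ 2 - S * S) / (2 * a - 1)) by (field; lra).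
  rewrite Hs. unfold qf, Delta, u. field. lra.
Qed.

Lemma case2_facts a t : 2/3 < a -> a < 1 -> 0 < t -> t < 1 ->
  t < (3 * a - 2) / (4 * a - 2) ->
  t < rho0 a t /\ rho0 a t < 2 - t /\
  (forall c, t <= c <= rho0 a t -> 0 <= qf a t c) /\
  (forall c, rho0 a t <= c -> c < 2 - t -> qf a t c <= 0).
Proof.
  intros Ha0 Ha1 Ht0 Ht1 Hth.
  assert (HD : 0 < Delta a t).
  { rewrite Delta_eq. assert (0 < (2 * a - 1) ^ 2 * (t * (2 - t))).
    apply Rmult_lt_0_compat. apply pow2_gt_0. lra. apply Rmult_lt_0_compat; lra.
    pose proof (pow2_ge_0 (a - 1 + t * (1 - 2 * a))). lra. }
  assert (HS : 0 < sqrt (Delta a t)) by (apply sqrt_lt_R0; exact HD).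
  assert (H01 : rho1 a t < rho0 a t).
  { unfold rho0, rho1. unfold Rdiv. 
    assert (0 < / (2 * a - 1)) by (apply Rinv_0_lt_compat; lra).
    assert (0 < sqrt (Delta a t) * / (2 * a - 1)) by (apply Rmult_lt_0_compat; lra).
    rewrite !Rmult_plus_distr_r, !Rmult_minus_distr_r. lra. }
  assert (Hqt : 0 < qf a t t).
  { unfold qf. replace ((2 * a - 1) * (2 - t - t) * (t + t) - 2 * a * t) with (t * (6 * a - 4 - (8 * a - 4) * t)) by ring.
    apply Rmult_lt_0_compat. lra.
    apply (Rmult_lt_compat_l (4 * a - 2)) in Hth; [|lra].
    replace ((4 * a - 2) * ((3 * a - 2) / (4 * a - 2))) with (3 * a - 2) in Hth by (field; lra). lra. }
  rewrite q_factor in Hqt by lra.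
  assert (Hpos : 0 < 2 * a - 1) by lra.
  assert (Hprod : (t - rho0 a t) * (t - rho1 a t) < 0).
  { replace (- (2 * a - 1) * (t - rho0 a t) * (t - rho1 a t)) with ((2 * a - 1) * (- ((t - rho0 a t) * (t - rho1 a t)))) in Hqt by ring.
    destruct (Rle_or_lt 0 ((t - rho0 a t) * (t - rho1 a t))); [|lra].
    assert (0 <= (2 * a - 1) * ((t - rho0 a t) * (t - rho1 a t))) by (apply Rmult_le_pos; lra).
    lra. }
  assert (Hr : rho1 a t < t /\ t < rho0 a t).
  { destruct (Rle_or_lt t (rho1 a t)).
    - assert (0 <= (t - rho0 a t) * (t - rho1 a t)) by (replace ((t - rho0 a t) * (t - rho1 a t)) with ((rho0 a t - t) * (rho1 a t - t)) by ring; apply Rmult_le_pos; lra). lra.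
    - destruct (Rle_or_lt (rho0 a t) t).
      + assert (0 <= (t - rho0 a t) * (t - rho1 a t)) by (apply Rmult_le_pos; lra). lra.
      + lra. }
  assert (Hq2 : qf a t (2 - t) < 0).
  { unfold qf. replace ((2 * a - 1) * (2 - t - (2 - t)) * (2 - t + t) - 2 * a * (2 - t)) with (- (2 * a * (2 - t))) by ring.
    assert (0 < 2 * a * (2 - t)) by (apply Rmult_lt_0_compat; lra). lra. }
  rewrite q_factor in Hq2 by lra.
  assert (Hr2 : rho0 a t < 2 - t).
  { destruct (Rle_or_lt (2 - t) (rho0 a t)); [|lra].
    assert (0 <= (2 * a - 1) * ((rho0 a t - (2 - t)) * (2 - t - rho1 a t))).
    { apply Rmult_le_pos. lra. apply Rmult_le_pos; lra. }
    replace (- (2 * a - 1) * (2 - t - rho0 a t) * (2 - t - rho1 a t)) with ((2 * a - 1) * ((rho0 a t - (2 - t)) * (2 - t - rho1 a t))) in Hq2 by ring.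
    lra. }
  split; [tauto|]. split; [exact Hr2|]. split.
  - intros c Hc. rewrite q_factor by lra.
    replace (- (2 * a - 1) * (c - rho0 a t) * (c - rho1 a t)) with ((2 * a - 1) * ((rho0 a t - c) * (c - rho1 a t))) by ring.
    apply Rmult_le_pos. lra. apply Rmult_le_pos; lra.
  - intros c Hc1 Hc2. rewrite q_factor by lra.
    replace (- (2 * a - 1) * (c - rho0 a t) * (c - rho1 a t)) with (- ((2 * a - 1) * ((c - rho0 a t) * (c - rho1 a t)))) by ring.
    assert (0 <= (2 * a - 1) * ((c - rho0 a t) * (c - rho1 a t))).
    { apply Rmult_le_pos. lra. apply Rmult_le_pos; lra. } lra.
Qed.

Lemma exp_mono x y : x <= y -> exp x <= exp y.
Proof. intros [H|H]. left; apply exp_increasing; exact H. rewrite H; lra. Qed.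

Lemma g_case1 a t r : 0 < a -> a < 1 -> 0 < t -> t < 1 ->
  (a <= 2 / 3 \/ (2 / 3 < a /\ (3 * a - 2) / (4 * a - 2) <= t)) ->
  t <= r -> r < 2 - t -> gf a t r <= gf a t t.
Proof.
  intros Ha0 Ha1 Ht0 Ht1 Hc Hr1 Hr2. unfold gf. apply exp_mono.
  destruct (Lf_mono a t t r Ht0 ltac:(lra) Hr1 Hr2) as [H _].
  assert (Lf a t r <= Lf a t t). { apply H. intros c Hc'. apply q_case1; auto; lra. }
  lra.
Qed.

Lemma g_case2 a t r : 2/3 < a -> a < 1 -> 0 < t -> t < 1 ->
  t < (3 * a - 2) / (4 * a - 2) ->
  t <= r -> r < 2 - t -> gf a t r <= gf a t (rho0 a t).
Proof.
  intros Ha0 Ha1 Ht0 Ht1 Hth Hr1 Hr2. unfold gf. apply exp_mono.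
  destruct (case2_facts a t Ha0 Ha1 Ht0 Ht1 Hth) as [H1 [H2 [H3 H4]]].
  destruct (Rle_or_lt r (rho0 a t)).
  - destruct (Lf_mono a t r (rho0 a t) Ht0 Hr1 H H2) as [_ H5].
    assert (Lf a t r <= Lf a t (rho0 a t)). { apply H5. intros c Hc. apply H3. lra. } lra.
  - destruct (Lf_mono a t (rho0 a t) r Ht0 ltac:(lra) ltac:(lra) Hr2) as [H5 _].
    assert (Lf a t r <= Lf a t (rho0 a t)). { apply H5. intros c Hc. apply H4; lra. } lra.
Qed.

Lemma cont_eps' (f : R -> R) x : continuous f x ->
  forall eps, 0 < eps -> exists d, 0 < d /\ forall y, Rabs (y - x) < d -> Rabs (f y - f x) < eps.
Proof.
  intros Hc eps He. apply filterlim_locally with (eps := mkposreal _ He) in Hc.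
  destruct Hc as [d Hd]. exists d. split. apply cond_pos.
  intros y Hy. apply (Hd y). exact Hy.
Qed.

Lemma g_approx a t eps : 0 < t -> t < 1 -> 0 < eps ->
  exists r, t < r /\ r < 2 - t /\ gf a t t - eps < gf a t r.
Proof.
  intros Ht0 Ht1 He.
  assert (Hc : continuous (gf a t) t).
  { apply (@ex_derive_continuous R_AbsRing R_NormedModule). unfold gf, Lf. auto_derive. repeat split; lra. }
  destruct (cont_eps' _ _ Hc (eps/2) ltac:(lra)) as [d [Hd H]].
  exists (t + Rmin (d/2) ((1 - t)/2)).
  pose proof (Rmin_l (d/2) ((1 - t)/2)). pose proof (Rmin_r (d/2) ((1 - t)/2)).
  assert (0 < Rmin (d/2) ((1 - t)/2)) by (apply Rmin_glb_lt; lra).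
  split. lra. split. lra.
  assert (Rabs (t + Rmin (d / 2) ((1 - t) / 2) - t) < d).
  { rewrite Rabs_pos_eq; lra. }
  specialize (H _ H3). apply Rlt_le, Rabs_bt in H as [H _]. lra.

Qed.

Lemma ln_div' x y : 0 < x -> 0 < y -> ln (x / y) = ln x - ln y.
Proof. intros. unfold Rdiv. rewrite ln_mult, ln_Rinv; try lra. apply Rinv_0_lt_compat; lra. Qed.

Lemma ln_sq x : 0 < x -> ln (x ^ 2) = 2 * ln x.
Proof. intros. rewrite ln_pow by lra. simpl. ring. Qed.

Lemma exp_div A B : exp A / exp B = exp (A - B).
Proof. unfold Rdiv. rewrite <- exp_Ropp, <- exp_plus. reflexivity. Qed.

Lemma gf_t a t : 0 < t -> t < 1 -> gf a t t = Rpower t (a - 1) / Rpower (1 - t) a.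
Proof.
  intros. unfold gf, Lf, Rpower. rewrite exp_div. f_equal.
  replace (2 - t - t) with (2 * (1 - t)) by ring. replace (t + t) with (2 * t) by ring.
  rewrite !ln_mult by lra. ring.
Qed.

Lemma gf_alt a t r : 0 < t -> t < 1 -> t < r -> r < 2 - t ->
  gf a t r = Rpower ((r - t) * (2 - t - r) / (1 - t) ^ 2) a / r / Rpower (1 - (t / r) ^ 2) a.
Proof.
  intros. unfold gf, Lf, Rpower.
  assert (E : forall A B, exp A / r / exp B = exp (A - ln r - B)).
  { intros. rewrite <- (exp_ln r) at 1 by lra. rewrite !exp_div. reflexivity. }
  rewrite E. f_equal.
  replace (1 - (t / r) ^ 2) with ((r - t) * (r + t) / r ^ 2) by (field; lra).
  assert (0 < (1 - t) ^ 2) by (apply pow_lt; lra). assert (0 < r ^ 2) by (apply pow_lt; lra).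
  rewrite !ln_div' by (try apply Rmult_lt_0_compat; lra).
  rewrite !ln_mult by lra. rewrite !ln_sq by lra. ring.
Qed.

Lemma gf_formula2 a t r : 0 < t -> t < 1 -> t < r -> r < 2 - t ->
  Rpower r (2 * a - 1) * Rpower ((1 - Rabs ((1 - r) / (1 - t)) ^ 2) / (r ^ 2 - t ^ 2)) a = gf a t r.
Proof.
  intros. rewrite pow2_abs.
  replace ((1 - ((1 - r) / (1 - t)) ^ 2) / (r ^ 2 - t ^ 2)) with ((2 - t - r) / ((1 - t) ^ 2 * (r + t))) by (field; split; nra).
  unfold gf, Lf, Rpower. rewrite <- exp_plus. f_equal.
  assert (0 < (1 - t) ^ 2) by (apply pow_lt; lra).
  rewrite !ln_div' by (try apply Rmult_lt_0_compat; lra).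
  rewrite !ln_mult by lra. rewrite !ln_sq by lra. ring.
Qed.

Definition cpow (v : C) (c : R) : C := cexp (Cmult (RtoC c) (clog v)).

Lemma Cmod_cpow v c : Cmod (cpow v c) = Rpower (Cmod v) c.
Proof. unfold cpow. rewrite Cmod_cexp. unfold Rpower, clog, Cmult, RtoC; simpl. f_equal. ring. Qed.

Lemma cmult_const_derive (g : C -> C) (k : C) x l :
  @is_derive C_AbsRing C_NormedModule g x l ->
  @is_derive C_AbsRing C_NormedModule (fun y => Cmult k (g y)) x (Cmult k l).
Proof.
  intros H. apply is_derive_C. intros eps He.
  destruct (is_derive_C_inv g x l H (eps / (Cmod k + 1))) as [d [Hd Hh]].
  { apply Rdiv_lt_0_compat. lra. pose proof (Cmod_ge_0 k). lra. }
  exists d. split. exact Hd. intros h Hh'. specialize (Hh h Hh').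
  replace (Cminus (Cminus (Cmult k (g (Cplus x h))) (Cmult k (g x))) (Cmult (Cmult k l) h))
    with (Cmult k (Cminus (Cminus (g (Cplus x h)) (g x)) (Cmult l h))) by ring.
  rewrite Cmod_mult. pose proof (Cmod_ge_0 k). pose proof (Cmod_ge_0 h).
  apply Rle_trans with (Cmod k * (eps / (Cmod k + 1) * Cmod h)). apply Rmult_le_compat_l; lra.
  assert (Cmod k * (eps / (Cmod k + 1)) <= eps).
  { replace (Cmod k * (eps / (Cmod k + 1))) with (eps * (Cmod k / (Cmod k + 1))) by (field; lra).
    assert (Cmod k / (Cmod k + 1) <= 1).
    { apply (Rmult_le_reg_r (Cmod k + 1)). lra. unfold Rdiv. rewrite Rmult_assoc, Rinv_l by lra. lra. }
    assert (0 <= Cmod k / (Cmod k + 1)) by (apply Rmult_le_pos; [lra| left; apply Rinv_0_lt_compat; lra]).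
    nra. }
  nra.
Qed.

Lemma cpow_ex_derive v c : 0 < fst v -> @ex_derive C_AbsRing C_NormedModule (fun y => cpow y c) v.
Proof.
  intros Hv. unfold cpow.
  apply (@ex_derive_comp C_AbsRing C_NormedModule cexp (fun y => Cmult (RtoC c) (clog y)) v).
  - eexists. apply cexp_derive.
  - eexists. apply is_derive_C_conv. apply cmult_const_derive. apply clog_derive. exact Hv.
Qed.

Lemma affine_derive (b : R) x :
  @is_derive C_AbsRing C_NormedModule (fun u => Cminus (RtoC 1) (Cmult (RtoC b) u)) x (Copp (RtoC b)).
Proof.
  apply is_derive_C. intros eps He. exists 1. split. lra. intros h Hh.
  replace (Cminus (Cminus (Cminus (RtoC 1) (Cmult (RtoC b) (Cplus x h))) (Cminus (RtoC 1) (Cmult (RtoC b) x)))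
          (Cmult (Copp (RtoC b)) h)) with (RtoC 0) by ring.
  rewrite Cmod_0. pose proof (Cmod_ge_0 h). nra.
Qed.

Definition fb (a b : R) (u : C) : C :=
  Cmult (RtoC (Rpower (1 - b ^ 2) a)) (cpow (Cminus (RtoC 1) (Cmult (RtoC b) u)) (-2 * a)).

Lemma fb_re_pos b u : 0 <= b -> b < 1 -> Cmod u < 1 -> 0 < fst (Cminus (RtoC 1) (Cmult (RtoC b) u)).
Proof.
  intros Hb0 Hb1 Hu. destruct (Cmod_re_im_le u) as [Ha _].
  assert (Ha' : Rabs (fst u) <= 1) by lra. apply Rabs_bt in Ha'.
  destruct u as [x y]. unfold Cminus, Cplus, Copp, Cmult, RtoC; simpl in *.
  assert (b * x <= b * 1) by (apply Rmult_le_compat_l; lra). lra.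
Qed.

Lemma fb_ex_derive a b u : 0 <= b -> b < 1 -> Cmod u < 1 ->
  @ex_derive C_AbsRing C_NormedModule (fb a b) u.
Proof.
  intros Hb0 Hb1 Hu. unfold fb.
  assert (Hc : @ex_derive C_AbsRing C_NormedModule (fun u => cpow (Cminus (RtoC 1) (Cmult (RtoC b) u)) (-2 * a)) u).
  { apply (@ex_derive_comp C_AbsRing C_NormedModule (fun y => cpow y (-2 * a))
     (fun u => Cminus (RtoC 1) (Cmult (RtoC b) u)) u).
    - apply cpow_ex_derive. apply fb_re_pos; auto.
    - eexists; apply is_derive_C_conv, affine_derive. }
  destruct Hc as [l Hl].
  eexists. eapply cmult_const_derive. exact Hl.
Qed.

Lemma Cmod_one_minus b u : 0 <= b -> b < 1 -> Cmod u < 1 ->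
  1 - b * Cmod u <= Cmod (Cminus (RtoC 1) (Cmult (RtoC b) u)).
Proof.
  intros. pose proof (Cmod_triangle (Cminus (RtoC 1) (Cmult (RtoC b) u)) (Cmult (RtoC b) u)).
  replace (Cplus (Cminus (RtoC 1) (Cmult (RtoC b) u)) (Cmult (RtoC b) u)) with (RtoC 1) in H2 by ring.
  rewrite Cmod_1, Cmod_mult, Cmod_R, Rabs_pos_eq in H2 by lra. lra.
Qed.

Lemma fb_bound a b u : 0 < a -> 0 <= b -> b < 1 -> Cmod u < 1 ->
  Rpower (1 - Cmod u ^ 2) a * Cmod (fb a b u) <= 1.
Proof.
  intros Ha Hb0 Hb1 Hu. unfold fb. rewrite Cmod_mult, Cmod_cpow, Cmod_R.
  pose proof (Cmod_ge_0 u).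
  pose proof (Cmod_one_minus b u Hb0 Hb1 Hu) as Hm.
  set (m := Cmod (Cminus (RtoC 1) (Cmult (RtoC b) u))) in *.
  assert (Hbu : b * Cmod u <= b * 1) by (apply Rmult_le_compat_l; lra).
  assert (Hm0 : 0 < m) by lra.
  assert (HA : 0 < 1 - Cmod u ^ 2) by nra. assert (HB : 0 < 1 - b ^ 2) by nra.
  rewrite Rabs_pos_eq by (unfold Rpower; left; apply exp_pos).
  unfold Rpower. rewrite <- !exp_plus. apply Rle_trans with (exp 0). 2:{ rewrite exp_0; lra. } apply exp_mono.
  assert (Hk : (1 - Cmod u ^ 2) * (1 - b ^ 2) <= m ^ 2).
  { assert ((1 - b * Cmod u) ^ 2 <= m ^ 2) by (apply pow_incr; split; lra).
    pose proof (pow2_ge_0 (Cmod u - b)). 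
    assert ((1 - Cmod u ^ 2) * (1 - b ^ 2) = (1 - b * Cmod u) ^ 2 - (Cmod u - b) ^ 2) by ring. lra. }
  assert (Hl : ln ((1 - Cmod u ^ 2) * (1 - b ^ 2)) <= ln (m ^ 2)).
  { destruct Hk as [Hk|Hk]. left; apply ln_increasing. apply Rmult_lt_0_compat; lra. exact Hk. rewrite Hk; lra. }
  rewrite ln_mult in Hl by lra. rewrite ln_sq in Hl by lra.
  assert (a * (ln (1 - Cmod u ^ 2) + ln (1 - b ^ 2) - 2 * ln m) <= 0) by (apply Rmult_le_0_l; lra).
  match goal with |- ?L <= _ => replace L with (a * (ln (1 - Cmod u ^ 2) + ln (1 - b ^ 2) - 2 * ln m)) by ring end.
  exact H0.
Qed.

Lemma fb_at_b a b : 0 <= b -> b < 1 -> Cmod (fb a b (RtoC b)) = Rpower (1 - b ^ 2) (- a).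
Proof.
  intros. unfold fb. rewrite Cmod_mult, Cmod_cpow, Cmod_R.
  replace (Cminus (RtoC 1) (Cmult (RtoC b) (RtoC b))) with (RtoC (1 - b ^ 2)).
  2:{ unfold RtoC, Cminus, Cplus, Copp, Cmult; simpl. f_equal; ring. }
  rewrite Cmod_R. assert (0 < 1 - b ^ 2) by nra.
  rewrite !Rabs_pos_eq by (try (unfold Rpower; left; apply exp_pos); lra).
  rewrite <- Rpower_plus. f_equal. ring.
Qed.

Lemma Tt_facts t (f : C -> C) z : 0 < t -> t < 1 -> Cmod z < 1 ->
  let w := Cplus (Cmult (RtoC (t - 1)) z) (RtoC 1) in
  t < Cmod w /\ Cmod w < 2 - t /\
  1 - Cmod z ^ 2 <= (Cmod w - t) * (2 - t - Cmod w) / (1 - t) ^ 2 /\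
  Cmod (Cdiv (RtoC t) w) = t / Cmod w /\
  Cmod (Tt t f z) = / Cmod w * Cmod (f (Cdiv (RtoC t) w)).
Proof.
  intros Ht0 Ht1 Hz w.
  assert (Ew : Cmod (Cminus w (RtoC 1)) = (1 - t) * Cmod z).
  { unfold w. replace (Cminus (Cplus (Cmult (RtoC (t - 1)) z) (RtoC 1)) (RtoC 1)) with (Cmult (RtoC (t - 1)) z) by ring.
    rewrite Cmod_mult, Cmod_R, Rabs_left by lra. ring. }
  pose proof (Cmod_minus_le w (RtoC 1)) as Hm. rewrite Cmod_1, Ew in Hm.
  pose proof (Cmod_ge_0 z) as Hz0.
  apply Rabs_bt in Hm.
  assert (Hzz : (1 - t) * Cmod z < 1 - t). { assert ((1 - t) * Cmod z < (1 - t) * 1) by (apply Rmult_lt_compat_l; lra). lra. }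
  assert (H1 : t < Cmod w) by lra. assert (H2 : Cmod w < 2 - t) by lra.
  assert (Hw0 : w <> RtoC 0). { intros E. rewrite E, Cmod_0 in H1. lra. }
  split; [exact H1|]. split; [exact H2|]. split.
  - assert (E : (Cmod w - t) * (2 - t - Cmod w) = (1 - t) ^ 2 - (Cmod w - 1) ^ 2) by ring.
    rewrite E. 
    assert ((Cmod w - 1) ^ 2 <= ((1 - t) * Cmod z) ^ 2).
    { rewrite <- (pow2_abs (Cmod w - 1)). apply pow_incr. split. apply Rabs_pos.
      unfold Rabs; destruct Rcase_abs; lra. }
    apply (Rmult_le_reg_r ((1 - t) ^ 2)). apply pow_lt; lra.
    unfold Rdiv. rewrite Rmult_assoc, Rinv_l by (apply pow_nonzero; lra).
    replace (((1 - t) * Cmod z) ^ 2) with ((1 - t) ^ 2 * Cmod z ^ 2) in H by ring. lra.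
  - split.
    + rewrite Cmod_div by exact Hw0. rewrite Cmod_R, Rabs_pos_eq by lra. reflexivity.
    + unfold Tt. fold w. rewrite Cmod_mult, Cmod_inv by exact Hw0. reflexivity.
Qed.

Lemma UB a t (f : C -> C) z : 0 < a -> 0 < t -> t < 1 ->
  (forall u, Cmod u < 1 -> Rpower (1 - Cmod u ^ 2) a * Cmod (f u) <= 1) ->
  Cmod z < 1 ->
  Rpower (1 - Cmod z ^ 2) a * Cmod (Tt t f z) <= gf a t (Cmod (Cplus (Cmult (RtoC (t - 1)) z) (RtoC 1))).
Proof.
  intros Ha Ht0 Ht1 Hf Hz.
  destruct (Tt_facts t f z Ht0 Ht1 Hz) as [H1 [H2 [H3 [H4 H5]]]].
  set (w := Cplus (Cmult (RtoC (t - 1)) z) (RtoC 1)) in *.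
  set (r := Cmod w) in *.
  rewrite H5. rewrite (gf_alt a t r) by lra.
  set (phi := Cdiv (RtoC t) w) in *.
  assert (Hphi : Cmod phi < 1). { rewrite H4. apply (Rmult_lt_reg_r r). lra. unfold Rdiv. rewrite Rmult_assoc, Rinv_l by lra. lra. }
  specialize (Hf phi Hphi). rewrite H4 in Hf.
  assert (HP : 0 < Rpower (1 - (t / r) ^ 2) a) by (unfold Rpower; apply exp_pos).
  assert (HP2 : 0 < Rpower (1 - Cmod z ^ 2) a) by (unfold Rpower; apply exp_pos).
  assert (Hfp : Cmod (f phi) <= / Rpower (1 - (t / r) ^ 2) a).
  { apply (Rmult_le_reg_l (Rpower (1 - (t / r) ^ 2) a)). exact HP. rewrite Rinv_r by lra. exact Hf. }
  assert (Hz2 : 0 < 1 - Cmod z ^ 2). { pose proof (Cmod_ge_0 z). nra. }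
  assert (HR : Rpower (1 - Cmod z ^ 2) a <= Rpower ((r - t) * (2 - t - r) / (1 - t) ^ 2) a).
  { apply Rle_Rpower_l. lra. split; lra. }
  assert (Hr0 : 0 < / r) by (apply Rinv_0_lt_compat; lra).
  pose proof (Cmod_ge_0 (f phi)).
  unfold Rdiv. 
  apply Rle_trans with (Rpower ((r - t) * (2 - t - r) * / (1 - t) ^ 2) a * (/ r * / Rpower (1 - (t * / r) ^ 2) a)).
  - apply Rmult_le_compat; try lra. apply Rmult_le_pos; lra.
    apply Rmult_le_compat_l; lra.
  - right. ring.
Qed.

Lemma LBpt a t x : 0 < a -> 0 < t -> t < 1 -> -1 < x -> x < 1 ->
  Rpower (1 - Cmod (RtoC x) ^ 2) a *
    Cmod (Tt t (fb a (t / (1 - (1 - t) * x))) (RtoC x)) = gf a t (1 - (1 - t) * x).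
Proof.
  intros Ha Ht0 Ht1 Hx1 Hx2.
  set (r := 1 - (1 - t) * x).
  assert (Hr1 : t < r). { unfold r. assert ((1 - t) * x < (1 - t) * 1) by (apply Rmult_lt_compat_l; lra). lra. }
  assert (Hr2 : r < 2 - t). { unfold r. assert ((1 - t) * (-1) < (1 - t) * x) by (apply Rmult_lt_compat_l; lra). lra. }
  assert (Ew : Cplus (Cmult (RtoC (t - 1)) (RtoC x)) (RtoC 1) = RtoC r).
  { unfold r, RtoC, Cplus, Cmult; simpl. f_equal; ring. }
  unfold Tt. rewrite Ew.
  assert (Hb : Cdiv (RtoC t) (RtoC r) = RtoC (t / r)).
  { unfold Cdiv. rewrite <- (RtoC_inv r) by lra. unfold RtoC, Cmult, Rdiv; simpl. f_equal; ring. }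
  rewrite Hb. rewrite Cmod_mult, Cmod_inv by (intros E; injection E; lra).
  assert (Hb0 : 0 <= t / r) by (apply Rmult_le_pos; [lra| left; apply Rinv_0_lt_compat; lra]).
  assert (Hb1 : t / r < 1). { apply (Rmult_lt_reg_r r). lra. unfold Rdiv. rewrite Rmult_assoc, Rinv_l by lra. lra. }
  rewrite fb_at_b by lra. rewrite !Cmod_R. rewrite (Rabs_pos_eq r) by lra.
  rewrite pow2_abs. rewrite (gf_alt a t r) by lra.
  replace ((r - t) * (2 - t - r) / (1 - t) ^ 2) with (1 - x ^ 2) by (unfold r; field; lra).
  rewrite Rpower_Ropp. unfold Rdiv. ring.
Qed.

Lemma kor_le a F V : (forall z, in_disc z -> Rpower (1 - Cmod z ^ 2) a * Cmod (F z) <= V) ->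
  Rbar_le (kor_norm a F) (Finite V).
Proof.
  intros H. unfold kor_norm. destruct (Lub_Rbar_correct (fun r => exists z : C, in_disc z /\
     r = Rpower (1 - (Cmod z) ^ 2) a * Cmod (F z))) as [_ Hl].
  apply Hl. intros r [z [Hz ->]]. simpl. apply H. exact Hz.
Qed.

Lemma kor_ge a F z : in_disc z -> Rbar_le (Finite (Rpower (1 - Cmod z ^ 2) a * Cmod (F z))) (kor_norm a F).
Proof.
  intros Hz. unfold kor_norm. destruct (Lub_Rbar_correct (fun r => exists z : C, in_disc z /\
     r = Rpower (1 - (Cmod z) ^ 2) a * Cmod (F z))) as [Hu _].
  apply Hu. exists z. split; auto.
Qed.

Lemma kor_elem a F : Rbar_le (kor_norm a F) (Finite 1) ->
  forall z, Cmod z < 1 -> Rpower (1 - Cmod z ^ 2) a * Cmod (F z) <= 1.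
Proof.
  intros H z Hz. pose proof (kor_ge a F z Hz) as H2.
  pose proof (Rbar_le_trans _ _ _ H2 H). simpl in H0. exact H0.
Qed.

Lemma kor_fin a F V z : in_disc z -> (forall z, in_disc z -> Rpower (1 - Cmod z ^ 2) a * Cmod (F z) <= V) ->
  exists r, kor_norm a F = Finite r /\ Rpower (1 - Cmod z ^ 2) a * Cmod (F z) <= r.
Proof.
  intros Hz H. pose proof (kor_le a F V H) as H1. pose proof (kor_ge a F z Hz) as H2.
  destruct (kor_norm a F) as [r| |] eqn:E; simpl in H1, H2; try contradiction.
  exists r. split; auto.
Qed.

Lemma fb_adm a b : 0 < a -> 0 <= b -> b < 1 ->
  in_Korenblum a (fb a b) /\ Rbar_le (kor_norm a (fb a b)) (Finite 1).
Proof.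
  intros Ha Hb0 Hb1.
  assert (Hb : forall z, in_disc z -> Rpower (1 - Cmod z ^ 2) a * Cmod (fb a b z) <= 1).
  { intros z Hz. apply fb_bound; auto. }
  assert (H0 : in_disc (RtoC 0)). { unfold in_disc. rewrite Cmod_0. lra. }
  split; [split|].
  - intros z Hz. apply fb_ex_derive; auto.
  - destruct (kor_fin a (fb a b) 1 (RtoC 0) H0 Hb) as [r [E _]]. rewrite E. reflexivity.
  - apply kor_le. exact Hb.
Qed.

Lemma opnorm_eq a t V :
  (forall f, Rbar_le (kor_norm a f) (Finite 1) -> forall z, in_disc z ->
      Rpower (1 - Cmod z ^ 2) a * Cmod (Tt t f z) <= V) ->
  (forall eps, 0 < eps -> exists f, in_Korenblum a f /\ Rbar_le (kor_norm a f) (Finite 1) /\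
      exists z, in_disc z /\ V - eps < Rpower (1 - Cmod z ^ 2) a * Cmod (Tt t f z)) ->
  op_norm_Korenblum a (Tt t) = Finite V.
Proof.
  intros HU HL. unfold op_norm_Korenblum. apply is_lub_Rbar_unique.
  assert (Hel : forall eps, 0 < eps -> exists r, (exists f, in_Korenblum a f /\
     Rbar_le (kor_norm a f) (Finite 1) /\ Finite r = kor_norm a (Tt t f)) /\ V - eps < r).
  { intros eps He. destruct (HL eps He) as [f [Hf1 [Hf2 [z [Hz Hv]]]]].
    destruct (kor_fin a (Tt t f) V z Hz (HU f Hf2)) as [r [E Hr]].
    exists r. split. exists f. split; auto. lra. }
  split.
  - intros r [f [_ [Hf E]]]. rewrite E. apply kor_le. apply HU. exact Hf.
  - intros b Hb. destruct b as [b| |]; simpl; auto.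
    + destruct (Rle_or_lt V b) as [H|H]; auto.
      destruct (Hel (V - b) ltac:(lra)) as [r [Hr Hr2]]. specialize (Hb r Hr). simpl in Hb. lra.
    + destruct (Hel 1 ltac:(lra)) as [r [Hr _]]. specialize (Hb r Hr). simpl in Hb. exact Hb.
Qed.

Lemma lower_point a t r : 0 < a -> 0 < t -> t < 1 -> t < r -> r < 2 - t ->
  exists f, in_Korenblum a f /\ Rbar_le (kor_norm a f) (Finite 1) /\
      exists z, in_disc z /\ Rpower (1 - Cmod z ^ 2) a * Cmod (Tt t f z) = gf a t r.
Proof.
  intros Ha Ht0 Ht1 Hr1 Hr2.
  set (x := (1 - r) / (1 - t)).
  assert (Hx : 1 - (1 - t) * x = r) by (unfold x; field; lra).
  assert (Hx1 : -1 < x /\ x < 1).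
  { unfold x. split.
    - apply (Rmult_lt_reg_r (1 - t)). lra. unfold Rdiv. rewrite Rmult_assoc, Rinv_l by lra. lra.
    - apply (Rmult_lt_reg_r (1 - t)). lra. unfold Rdiv. rewrite Rmult_assoc, Rinv_l by lra. lra. }
  assert (Hb0 : 0 <= t / r) by (apply Rmult_le_pos; [lra| left; apply Rinv_0_lt_compat; lra]).
  assert (Hb1 : t / r < 1). { apply (Rmult_lt_reg_r r). lra. unfold Rdiv. rewrite Rmult_assoc, Rinv_l by lra. lra. }
  destruct (fb_adm a (t / r) Ha Hb0 Hb1) as [H1 H2].
  exists (fb a (t / r)). split; auto. split; auto.
  exists (RtoC x). split.
  - unfold in_disc. rewrite Cmod_R. unfold Rabs; destruct Rcase_abs; lra.
  - pose proof (LBpt a t x Ha Ht0 Ht1 ltac:(lra) ltac:(lra)) as E. rewrite Hx in E. exact E.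
Qed.

Theorem mainTheorem2 (alpha t : R) (ha0 : 0 < alpha) (ha1 : alpha < 1)
  (ht0 : 0 < t) (ht1 : t < 1) :
  ((alpha <= 2 / 3 \/ (2 / 3 < alpha /\ (3 * alpha - 2) / (4 * alpha - 2) <= t)) ->
     op_norm_Korenblum alpha (Tt t) =
       Finite (Rpower t (alpha - 1) / Rpower (1 - t) alpha)) /\
  ((2 / 3 < alpha /\ t < (3 * alpha - 2) / (4 * alpha - 2)) ->
     op_norm_Korenblum alpha (Tt t) =
       Finite (Rpower (1 - x0 alpha t) (2 * alpha - 1) *
               Rpower ((1 - (Rabs (x0 alpha t / (1 - t))) ^ 2)
                       / ((1 - x0 alpha t) ^ 2 - t ^ 2)) alpha)).
Proof.
  split.
  - intros Hc. rewrite <- gf_t by lra. apply opnorm_eq.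
    + intros f Hf z Hz. eapply Rle_trans. apply UB; auto. intros u Hu. apply kor_elem; auto.
      destruct (Tt_facts t f z ht0 ht1 Hz) as [H1 [H2 _]].
      apply g_case1; auto; lra.
    + intros eps He. destruct (g_approx alpha t eps ht0 ht1 He) as [r [Hr1 [Hr2 Hr3]]].
      destruct (lower_point alpha t r ha0 ht0 ht1 Hr1 Hr2) as [f [Hf1 [Hf2 [z [Hz E]]]]].
      exists f. split; auto. split; auto. exists z. split; auto. rewrite E. exact Hr3.
  - intros [Ha Hth].
    destruct (case2_facts alpha t Ha ha1 ht0 ht1 Hth) as [Hr1 [Hr2 _]].
    assert (Hx : x0 alpha t = 1 - rho0 alpha t) by (unfold x0, rho0, Delta; ring).
    rewrite Hx. replace (1 - (1 - rho0 alpha t)) with (rho0 alpha t) by ring.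
    rewrite gf_formula2 by lra. apply opnorm_eq.
    + intros f Hf z Hz. eapply Rle_trans. apply UB; auto. intros u Hu. apply kor_elem; auto.
      destruct (Tt_facts t f z ht0 ht1 Hz) as [H1 [H2 _]].
      apply g_case2; auto; lra.
    + intros eps He.
      destruct (lower_point alpha t (rho0 alpha t) ha0 ht0 ht1 Hr1 Hr2) as [f [Hf1 [Hf2 [z [Hz E]]]]].
      exists f. split; auto. split; auto. exists z. split; auto. rewrite E. lra.
Qed.
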